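(* (a) There is an absolute constant $c>0$ such that for every event graph $G$ with $n$ nodes and every node $(v,X)$ of the unique sink component $\mathcal C$ of $\mathrm{dec}(G)$, a certifying walk for $(v,X)$ of minimum length has length at most $c n^2$. Consequently, for any two nodes $(u,X),(v,Y)$ of $\mathcal C$ there is a directed walk in $\mathcal C$ from $(u,X)$ to $(v,Y)$ of length at most $c' n^2$ for an absolute constant $c'$, i.e., $\mathcal C$ has diameter $O(n^2)$. (b) Both bounds are tight: for every integer $m\ge 2$, let $P$ be the path with $n=2m+1$ vertices whose labels, in order along the path, are $\mathtt{i}m,\mathtt{i}(m-1),\dots,\mathtt{i}1,\mathtt{d}m,\mathtt{d}1,\mathtt{d}2,\dots,\mathtt{d}m$, let $v$ be its middle vertex (labeled $\mathtt{d}m$), and let $Y=\{2k+1 : k=0,\dots,\lfloor m/2\rfloor-1\}$. Then $(v,\emptyset)$ and $(v,Y)$ are nodes of the unique sink component of $\mathrm{dec}(P)$, every certifying walk for $(v,Y)$ has length $\Omega(n^2)$, and every directed walk in $\mathrm{dec}(P)$ from $(v,\emptyset)$ to $(v,Y)$ has length $\Omega(n^2)$.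
   Context: An event graph is a finite, connected, undirected graph $G=(V,E)$, with $n=|V|$, in which every node $v$ carries a label that is either $\mathtt{i}x_v$ (insertion of $x_v$) or $\mathtt{d}x_v$ (deletion of $x_v$), where $x_v$ is an element of a finite universe $\mathcal U$. Write $\mathcal U_{|V}=\{x_v : v\in V\}$. It is assumed that for each $x\in\mathcal U_{|V}$ at least one node is labeled $\mathtt{i}x$ and at least one node is labeled $\mathtt{d}x$. The decorated graph $\mathrm{dec}(G)$ is the directed graph with vertex set $V\times 2^{\mathcal U_{|V}}$ in which $((u,X),(v,Y))$ is an edge if and only if $\{u,v\}\in E$ and $Y=X\cup\{x_v\}$ when $v$ is labeled $\mathtt{i}x_v$, respectively $Y=X\setminus\{x_v\}$ when $v$ is labeled $\mathtt{d}x_v$. A sink component of $\mathrm{dec}(G)$ is a strongly connected component of $\mathrm{dec}(G)$ from which no edge leads to a different strongly connected component; $\mathrm{dec}(G)$ has exactly one sink component, denoted $\mathcal C$. A walk in a graph is a finite sequence of nodes in which each node is joined by an edge to its successor (nodes may repeat); it is closed if its first and last nodes coincide; its length is its number of nodes. Given $v\in V$ and $X\subseteq\mathcal U_{|V}$, a certifying walk for $(v,X)$ is a closed walk $W$ in $G$ that starts and ends at $v$, contains for every $x\in\mathcal U_{|V}$ at least one node labeled $\mathtt{i}x$ or $\mathtt{d}x$, and satisfies, for every $x\in\mathcal U_{|V}$: $x\in X$ if and only if the last node of $W$ whose label refers to $x$ is labeled $\mathtt{i}x$. (A node $(v,X)$ lies in $\mathcal C$ iff a certifying walk for it exists.) 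*)

(* Defs.v *)
From HB Require Import structures.
From mathcomp Require Import all_boot.
Set Implicit Arguments. Unset Strict Implicit. Unset Printing Implicit Defensive.

(* An event graph: vertex type V (finite), finite universe U,
   undirected simple graph given by e : rel V,
   lab v = true means v is labelled  i x_v,  false means  d x_v,
   elt v = x_v. *)

Definition univV (V U : finType) (elt : V -> U) : {set U} := [set elt v | v : V].

Definition event_graph (V U : finType) (e : rel V) (lab : V -> bool) (elt : V -> U)
  : Prop :=
  [/\ symmetric e, irreflexive e, (forall u v : V, connect e u v) &
      forall x, x \in univV elt ->
        (exists v, elt v = x /\ lab v) /\ (exists v, elt v = x /\ ~~ lab v)].

Definition dec_node (V U : finType) (elt : V -> U) (p : V * {set U}) : bool :=
  p.2 \subset univV elt.

Definition dec_edge (V U : finType) (e : rel V) (lab : V -> bool) (elt : V -> U)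
  : rel (V * {set U}) :=
  fun p q =>
    [&& dec_node elt p, dec_node elt q, e p.1 q.1 &
        q.2 == (if lab q.1 then elt q.1 |: p.2 else p.2 :\ elt q.1)].

(* A walk from x to y (length = number of nodes = size s). *)
Definition walk (T : eqType) (E : rel T) (x y : T) (s : seq T) : bool :=
  match s with
  | [::] => false
  | a :: t => [&& a == x, path E a t & last a t == y]
  end.

Definition scc (T : finType) (E : rel T) (p q : T) : bool :=
  connect E p q && connect E q p.

Definition in_sink (V U : finType) (e : rel V) (lab : V -> bool) (elt : V -> U)
  (p : V * {set U}) : Prop :=
  dec_node elt p /\
  forall a b, scc (dec_edge e lab elt) p a -> dec_edge e lab elt a b ->
              scc (dec_edge e lab elt) p b.

Definition last_ref (V U : finType) (elt : V -> U) (W : seq V) (x : U) : option V :=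
  ohead (rev [seq w <- W | elt w == x]).

Definition certifying (V U : finType) (e : rel V) (lab : V -> bool) (elt : V -> U)
  (v : V) (X : {set U}) (W : seq V) : Prop :=
  [/\ walk e v v W,
      (forall x, x \in univV elt -> has (fun w => elt w == x) W) &
      (forall x, x \in univV elt ->
         (x \in X <-> exists w, last_ref elt W x = Some w /\ lab w))].

(* The tightness example: path on 2m+1 vertices 0..2m, labels
   i m, i (m-1), ..., i 1, d m, d 1, d 2, ..., d m; universe 'I_(m+1)
   (elements 1..m used). *)
Definition pathP_edge (m : nat) : rel 'I_(2 * m).+1 :=
  fun i j => (i.+1 == j :> nat) || (j.+1 == i :> nat).

Definition pathP_lab (m : nat) (i : 'I_(2 * m).+1) : bool := i < m.

Definition pathP_elt (m : nat) (i : 'I_(2 * m).+1) : 'I_m.+1 :=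
  inord (if i < m then m - i else if i == m :> nat then m else i - m).

Definition pathP_mid (m : nat) : 'I_(2 * m).+1 := inord m.

Definition pathP_Y (m : nat) : {set 'I_m.+1} :=
  [set (inord (2 * k + 1) : 'I_m.+1) | k : 'I_(m./2)].

(* Main.v *)
Require Import Defs.
From HB Require Import structures.
From mathcomp Require Import all_boot zify.
Set Implicit Arguments. Unset Strict Implicit. Unset Printing Implicit Defensive.

Definition upd (V U : finType) (lab : V -> bool) (elt : V -> U) (Z : {set U}) (w : V) :=
  if lab w then elt w |: Z else Z :\ elt w.
Definition run (V U : finType) (lab : V -> bool) (elt : V -> U) Z (t : seq V) :=
  foldl (upd lab elt) Z t.
Fixpoint dtrace (V U : finType) (lab : V -> bool) (elt : V -> U) Z (t : seq V)
  : seq (V * {set U}) :=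
  match t with [::] => [::] | w :: t' => (w, upd lab elt Z w) :: dtrace lab elt (upd lab elt Z w) t' end.

Lemma last_ref_cons (V U : finType) (elt : V -> U) w t x :
  last_ref elt (w :: t) x =
  if last_ref elt t x is Some y then Some y else if elt w == x then Some w else None.
Proof.
rewrite /last_ref /=; case: ifP => _; last by case: (rev _).
by rewrite rev_cons -cats1; case: (rev _).
Qed.

Lemma last_ref_cat (V U : finType) (elt : V -> U) t1 t2 x :
  last_ref elt (t1 ++ t2) x =
  if last_ref elt t2 x is Some y then Some y else last_ref elt t1 x.
Proof.
rewrite /last_ref filter_cat rev_cat; by case: (rev _).
Qed.

Lemma last_refP (V U : finType) (elt : V -> U) t x :
  (last_ref elt t x != None) = has (fun w => elt w == x) t.
Proof.
elim: t => [|w t IH] //=; rewrite last_ref_cons.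
case: (last_ref elt t x) IH => [y|] /= <-; first by rewrite orbT.
by case: (elt w == x).
Qed.

Lemma last_ref_elt (V U : finType) (elt : V -> U) t x w :
  last_ref elt t x = Some w -> (w \in t) && (elt w == x).
Proof.
elim: t w => [|u t IH] w //=; rewrite last_ref_cons.
case E: (last_ref elt t x) => [y|]; first by case=> <-; rewrite in_cons; case/andP: (IH _ E) => -> ->; rewrite orbT.
by case: ifP => // H [<-]; rewrite mem_head H.
Qed.

Lemma last_ref_has (V U : finType) (elt : V -> U) t1 t2 x :
  has (fun w => elt w == x) t2 -> last_ref elt (t1 ++ t2) x = last_ref elt t2 x.
Proof.
rewrite -last_refP last_ref_cat; by case: (last_ref elt t2 x).
Qed.

Lemma last_ref_nhas (V U : finType) (elt : V -> U) t1 t2 x :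
  ~~ has (fun w => elt w == x) t2 -> last_ref elt (t1 ++ t2) x = last_ref elt t1 x.
Proof.
rewrite -last_refP negbK last_ref_cat => /eqP ->; done.
Qed.

Lemma run_cons (V U : finType) (lab : V -> bool) (elt : V -> U) Z w t :
  run lab elt Z (w :: t) = run lab elt (upd lab elt Z w) t.
Proof. by []. Qed.

Lemma run_cat (V U : finType) (lab : V -> bool) (elt : V -> U) Z t1 t2 :
  run lab elt Z (t1 ++ t2) = run lab elt (run lab elt Z t1) t2.
Proof. by rewrite /run foldl_cat. Qed.

Lemma runP (V U : finType) (lab : V -> bool) (elt : V -> U) Z t x :
  (x \in run lab elt Z t) =
  if last_ref elt t x is Some w then lab w else x \in Z.
Proof.
elim/last_ind: t => [|t w IH] //.
rewrite -cats1 run_cat last_ref_cat.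
have -> : last_ref elt [:: w] x = if elt w == x then Some w else None.
  by rewrite /last_ref /=; case: (elt w == x).
rewrite /run /= -/(run lab elt Z t) /upd.
case H: (elt w == x).
  by case: (lab w); rewrite ?in_setU1 ?in_setD1 eq_sym H.
by rewrite -IH; case: (lab w); rewrite ?in_setU1 ?in_setD1 eq_sym H.
Qed.

Lemma elt_univV (V U : finType) (elt : V -> U) w : elt w \in univV elt.
Proof. by apply/imsetP; exists w. Qed.

Lemma upd_sub (V U : finType) (lab : V -> bool) (elt : V -> U) (Z : {set U}) w :
  Z \subset univV elt -> upd lab elt Z w \subset univV elt.
Proof.
rewrite /upd => H; case: (lab w).
  by rewrite subUset sub1set elt_univV.
by apply: subset_trans H; apply: subD1set.
Qed.

Lemma run_sub (V U : finType) (lab : V -> bool) (elt : V -> U) (Z : {set U}) t :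
  Z \subset univV elt -> run lab elt Z t \subset univV elt.
Proof. by elim: t Z => [|w t IH] Z //= H; apply: IH; apply: upd_sub. Qed.

Lemma dtrace_path (V U : finType) (e : rel V) (lab : V -> bool) (elt : V -> U) a (Z : {set U}) t :
  dec_node elt (a, Z) -> path e a t -> path (dec_edge e lab elt) (a, Z) (dtrace lab elt Z t).
Proof.
elim: t a Z => [|w t IH] a Z //= Ha /andP[eaw pt].
have Hw : dec_node elt (w, upd lab elt Z w) by apply: upd_sub.
by rewrite IH // /dec_edge Ha Hw eaw eqxx.
Qed.

Lemma dtrace_last (V U : finType) (lab : V -> bool) (elt : V -> U) a (Z : {set U}) t :
  last (a, Z) (dtrace lab elt Z t) = (last a t, run lab elt Z t).
Proof. by elim: t a Z => [|w t IH] a Z //=; rewrite IH. Qed.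

Lemma size_dtrace (V U : finType) (lab : V -> bool) (elt : V -> U) (Z : {set U}) t :
  size (dtrace lab elt Z t) = size t.
Proof. by elim: t Z => [|w t IH] Z //=; rewrite IH. Qed.

Lemma dec_path_proj (V U : finType) (e : rel V) (lab : V -> bool) (elt : V -> U) a (Z : {set U}) s :
  path (dec_edge e lab elt) (a, Z) s ->
  path e a (map fst s) /\ last (a, Z) s = (last a (map fst s), run lab elt Z (map fst s)).
Proof.
elim: s a Z => [|[w Z'] s IH] a Z //= /andP[H ps].
case/and4P: H => _ _ /= eaw /eqP EZ.
have [p1 p2] := IH _ _ ps.
by rewrite eaw p1 p2 EZ.
Qed.

Lemma reach (V U : finType) (e : rel V) (lab : V -> bool) (elt : V -> U) a (Z : {set U}) t :
  dec_node elt (a, Z) -> path e a t ->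
  connect (dec_edge e lab elt) (a, Z) (last a t, run lab elt Z t).
Proof.
move=> Ha pt; apply/connectP; exists (dtrace lab elt Z t).
  exact: dtrace_path.
by rewrite dtrace_last.
Qed.

Lemma scc_trans (T : finType) (E : rel T) a b c : scc E a b -> scc E b c -> scc E a c.
Proof.
case/andP=> ab ba /andP[bc cb]; apply/andP; split; apply: connect_trans; eassumption.
Qed.

Lemma sink_scc (V U : finType) (e : rel V) (lab : V -> bool) (elt : V -> U) p q :
  in_sink e lab elt p -> connect (dec_edge e lab elt) p q -> scc (dec_edge e lab elt) p q.
Proof.
case=> _ Hs /connectP[s ps ->]; elim/last_ind: s ps => [|s b IH].
  by move=> _; rewrite /scc connect0.
rewrite rcons_path last_rcons => /andP[ps eb]; exact: Hs (IH ps) eb.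
Qed.

Lemma sink_closed (V U : finType) (e : rel V) (lab : V -> bool) (elt : V -> U) p q :
  in_sink e lab elt p -> connect (dec_edge e lab elt) p q -> in_sink e lab elt q.
Proof.
move=> Hp pq; have spq := sink_scc Hp pq; split.
  case/connectP: pq => s ps ->; case: Hp => Hp _.
  elim/last_ind: s ps => [|s b IH] //.
  by rewrite rcons_path last_rcons => /andP[_ /and4P[]].
move=> a b sqa eab.
have spa := scc_trans spq sqa.
have spb := proj2 Hp _ _ spa eab.
apply: scc_trans _ spb; case/andP: spq => ? ?; exact/andP.
Qed.

Lemma all_reach_sink (V U : finType) (e : rel V) (lab : V -> bool) (elt : V -> U) p :
  dec_node elt p -> (forall q, dec_node elt q -> connect (dec_edge e lab elt) q p) ->
  in_sink e lab elt p.
Proof.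
move=> Hp Hall; split => // a b /andP[pa ap] eab; apply/andP; split.
  by apply: connect_trans pa (connect1 eab).
by apply: Hall; case/and4P: eab.
Qed.

Lemma split_lastref (V U : finType) (elt : V -> U) (t : seq V) : t != [::] ->
  exists ta w tb, [/\ t = ta ++ w :: tb, ~~ has (fun v => elt v == elt w) tb &
     forall u, u \in ta -> has (fun v => elt v == elt u) (w :: tb)].
Proof.
elim: t => [|u r IH] // _.
case H: (has (fun v => elt v == elt u) r).
  have rn : r != [::] by case: r H IH.
  have [ta [w [tb [Er Hw Hta]]]] := IH rn.
  exists (u :: ta), w, tb; split => //; first by rewrite Er.
  move=> u'; rewrite in_cons => /orP[/eqP->|]; last exact: Hta.
  move: H; rewrite Er has_cat => /orP[/hasP[y yta /eqP <-]|//].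
  exact: Hta.
by exists [::], u, r; rewrite H.
Qed.

Lemma shorten_walk (V U : finType) (e : rel V) (elt : V -> U) (a : V) (t : seq V) :
  path e a t -> exists t', [/\ path e a t', last a t' = last a t, {subset t' <= t},
    (forall x, last_ref elt t' x = last_ref elt t x) &
    size t' <= #|V| * #|[set elt u | u in t]|].
Proof.
elim: {t}(size t).+1 {-2}t (ltnSn (size t)) a => // N IH t Hs a pt.
case: (altP (t =P [::])) => [->|tn]; first by exists [::].
have [ta [w [tb [Et Hw Hta]]]] := split_lastref elt tn.
have : path e a (ta ++ w :: tb) by rewrite -Et.
rewrite cat_path /= => /and3P[pta ew ptb].
have Hsb : size tb < N by move: Hs; rewrite Et size_cat /=; lia.
have [tb' [ptb' ltb' stb' rtb' sztb']] := IH tb Hsb w ptb.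
move: ew; case: (shortenP pta) => p' pp' up' sp' ew.
have Hrw : forall x, last_ref elt (w :: tb') x = last_ref elt (w :: tb) x.
  by move=> x; rewrite !last_ref_cons rtb'.
have Hnone : forall s x, {subset s <= ta} -> last_ref elt (w :: tb) x = None ->
    last_ref elt s x = None.
  move=> s x ss Hn; case E: (last_ref elt s x) => [y|] //.
  case/andP: (last_ref_elt E) => ys /eqP ey.
  have := Hta y (ss _ ys); rewrite ey -last_refP Hn //.
exists (p' ++ w :: tb'); split.
- by rewrite cat_path /= pp' ew ptb'.
- by rewrite Et !last_cat /= ltb'.
- move=> u; rewrite Et !mem_cat !in_cons => /orP[/sp'->//|/orP[->|/stb'->]];
  by rewrite ?orbT.
- move=> x; rewrite Et !last_ref_cat Hrw.
  case E: (last_ref elt (w :: tb) x) => [y|] //.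
  by rewrite (Hnone _ _ sp' E) (Hnone _ _ (fun u h => h) E).
- set S := [set elt u | u in t]; set Sb := [set elt u | u in tb].
  have pS : Sb \proper S.
    apply/properP; split.
      apply/subsetP => y /imsetP[u ub ->]; apply/imsetP; exists u => //.
      by rewrite ?inE Et mem_cat in_cons ub !orbT.
    exists (elt w); first by apply/imsetP; exists w => //; rewrite ?inE Et mem_cat mem_head orbT.
    apply/imsetP => -[u ub eu]; move: Hw => /hasP; apply; exists u.
    by rewrite ?inE in ub. by rewrite eu.
  have cS := proper_card pS.
  have szp : size p' < #|V|.
    have := max_card (mem (a :: p')); rewrite (card_uniqP up') /=; lia.
  rewrite size_cat /=.
  have : size tb' <= #|V| * #|Sb| by [].
  have := leq_mul (leqnn #|V|) cS; rewrite mulnS; move=> H1 H2; apply: leq_trans H1; rewrite addnS -addSn; exact: leq_add.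
Qed.

Definition strong_cert (V U : finType) (e : rel V) (lab : V -> bool) (elt : V -> U)
  (v : V) (X : {set U}) (t : seq V) : Prop :=
  [/\ path e v t, last v t = v,
      (forall x, x \in univV elt -> has (fun w => elt w == x) t) &
      (forall x, x \in univV elt ->
         (x \in X <-> exists w, last_ref elt t x = Some w /\ lab w))].

Lemma strong_to_cert (V U : finType) (e : rel V) (lab : V -> bool) (elt : V -> U) v X t :
  strong_cert e lab elt v X t -> certifying e lab elt v X (v :: t).
Proof.
case=> pt lt hc hl; split.
- by rewrite /walk eqxx pt lt eqxx.
- by move=> x /hc /= ->; rewrite orbT.
- move=> x Hx; rewrite (hl x Hx).
  have := hc x Hx; rewrite -last_refP last_ref_cons.
  by case: (last_ref elt t x).
Qed.

Lemma card_elts (V U : finType) (elt : V -> U) (t : seq V) :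
  #|[set elt u | u in t]| <= #|V|.
Proof. exact: leq_trans (leq_imset_card _ _) (max_card _). Qed.

Lemma strong_short (V U : finType) (e : rel V) (lab : V -> bool) (elt : V -> U) v X t :
  strong_cert e lab elt v X t -> exists t', strong_cert e lab elt v X t' /\ size t' <= #|V| ^ 2.
Proof.
case=> pt lt hc hl.
have [t' [pt' lt' st' rt' sz]] := shorten_walk elt pt.
exists t'; split.
- split => //; first by rewrite lt' lt.
  + by move=> x Hx; rewrite -last_refP rt' last_refP hc.
  + by move=> x Hx; rewrite rt'; exact: hl.
- apply: leq_trans sz _; rewrite expnS expn1 leq_mul2l card_elts orbT //.
Qed.

Lemma cover_walk (V : finType) (e : rel V) :
  (forall u v, connect e u v) -> forall (l : seq V) a b,
  exists t, [/\ path e a t, last a t = b & {subset l <= a :: t}].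
Proof.
move=> Hc; elim=> [|u l IH] a b.
  by have /connectP[p pp ->] := Hc a b; exists p.
have /connectP[p1 pp1 E1] := Hc a u.
have [t2 [pt2 lt2 st2]] := IH u b.
exists (p1 ++ t2); split.
- by rewrite cat_path pp1 -E1 pt2.
- by rewrite last_cat -E1.
- move=> y; rewrite in_cons => /orP[/eqP->|/st2].
    by have := mem_last a p1; rewrite -E1 !in_cons mem_cat => /orP[->|->]; rewrite ?orbT.
  rewrite !in_cons mem_cat => /orP[/eqP->|->]; last by rewrite !orbT.
  by have := mem_last a p1; rewrite -E1 in_cons => /orP[->|->]; rewrite ?orbT.
Qed.

Lemma sink_strong (V U : finType) (e : rel V) (lab : V -> bool) (elt : V -> U) v X :
  event_graph e lab elt -> in_sink e lab elt (v, X) -> exists t, strong_cert e lab elt v X t.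
Proof.
case=> _ _ Hc Hlab Hs.
have [t0 [pt0 lt0 st0]] := cover_walk Hc (enum V) v v.
have t0n : t0 != [::].
  apply/eqP => E; move: st0; rewrite E => st0.
  have [[u1 [e1 l1]] [u2 [e2 l2]]] := Hlab _ (elt_univV elt v).
  have := st0 u1 (mem_enum _ u1); have := st0 u2 (mem_enum _ u2).
  rewrite !mem_seq1 => /eqP E2 /eqP E1; move: l1 l2; rewrite E1 E2 => ->.
  done.
have hc0 : forall x, x \in univV elt -> has (fun w => elt w == x) t0.
  move=> x /imsetP[u _ ->]; apply/hasP.
  have : u \in v :: t0 by apply: st0; rewrite mem_enum.
  rewrite in_cons => /orP[/eqP->|]; last by exists u.
  exists (last v t0); last by rewrite lt0.
  by case: t0 t0n {pt0 lt0 st0} => // w r _; rewrite /= mem_last.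
have Hn : dec_node elt (v, X) by case: Hs.
have R1 := reach lab Hn pt0; rewrite lt0 in R1.
have /andP[_ /connectP[s ps Es]] := sink_scc Hs R1.
have [pt1 Els] := dec_path_proj ps.
rewrite Els in Es; case: Es => E1 E2.
exists (t0 ++ map fst s); split.
- by rewrite cat_path pt0 lt0 pt1.
- by rewrite last_cat lt0 -E1.
- by move=> x Hx; rewrite has_cat hc0.
- move=> x Hx; rewrite E2 -run_cat runP.
  have H : has (fun w => elt w == x) (t0 ++ map fst s) by rewrite has_cat hc0.
  move: H; rewrite -last_refP.
  case: (last_ref elt _ x) => [w|] // _.
  split => [H|[w1 [[<-] H]]] //; by exists w.
Qed.

Lemma partA1 : exists c : nat, 0 < c /\
    forall (V U : finType) (e : rel V) (lab : V -> bool) (elt : V -> U),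
      event_graph e lab elt ->
      forall (v : V) (X : {set U}), in_sink e lab elt (v, X) ->
        exists W, certifying e lab elt v X W /\ size W <= c * #|V| ^ 2.
Proof.
exists 2; split => // V U e lab elt He v X Hs.
have [t Ht] := sink_strong He Hs.
have [t' [Ht' sz]] := strong_short Ht.
exists (v :: t'); split; first exact: strong_to_cert.
have : 0 < #|V| by apply/card_gt0P; exists v.
move: sz => /=; set n := #|V|; move=> sz n0.
have : 1 <= n ^ 2 by rewrite expn_gt0 n0.
lia.
Qed.

Lemma partA2 : exists c' : nat, 0 < c' /\
    forall (V U : finType) (e : rel V) (lab : V -> bool) (elt : V -> U),
      event_graph e lab elt ->
      forall p q, in_sink e lab elt p -> in_sink e lab elt q ->
        exists s, [/\ walk (dec_edge e lab elt) p q s,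
                      (forall a, a \in s -> in_sink e lab elt a) &
                      size s <= c' * #|V| ^ 2].
Proof.
exists 2; split => // V U e lab elt He [u X] [v Y] Hp Hq.
have [t Ht] := sink_strong He Hq.
have [t' [[pt' lt' hc hl] sz]] := strong_short Ht.
have [_ _ Hc _] := He.
have /connectP[p0 pp0 E0] := Hc u v.
case: (shortenP pp0) E0 => pth ppth upth _ E0.
have Hnp : dec_node elt (u, X) by case: Hp.
have Hnq : dec_node elt (v, Y) by case: Hq.
have pt : path e u (pth ++ t') by rewrite cat_path ppth -E0 pt'.
have Erun : run lab elt X (pth ++ t') = Y.
  apply/setP => x; case Hx: (x \in univV elt).
    rewrite runP last_ref_has ?hc //.
    have := hc x Hx; rewrite -last_refP.
    case E: (last_ref elt t' x) => [w|] // _.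
    apply/idP/idP => [Hw|/(hl x Hx)[w1 []]]; last by rewrite E => -[<-].
    by apply/(hl x Hx); exists w.
  have /subsetP S1 := run_sub lab (pth ++ t') Hnp.
  have /subsetP S2 := Hnq.
  apply/idP/idP => [/S1|/S2]; by rewrite Hx.
exists ((u, X) :: dtrace lab elt X (pth ++ t')); split.
- rewrite /walk eqxx dtrace_path // dtrace_last Erun last_cat -E0 lt' /=.
  exact: eqxx.
- move=> a Ha; apply: sink_closed Hp _.
  exact: (path_connect (dtrace_path lab Hnp pt)).
- rewrite /= size_dtrace size_cat.
  have : size pth < #|V|.
    have := max_card (mem (u :: pth)); rewrite (card_uniqP upth) /=; lia.
  have : 0 < #|V| by apply/card_gt0P; exists v.
  move: sz; set n := #|V| => sz n0 szp.
  have : n <= n ^ 2 by rewrite expnS expn1 leq_pmulr.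
  have szp2 : @size V pth < n := szp. move: sz; move: (n ^ 2) => N; lia.
Qed.

Lemma eltv m (u : 'I_(2 * m).+1) :
  val (pathP_elt u) = if u < m then m - u else if u == m :> nat then m else u - m.
Proof.
rewrite /pathP_elt /= inordK //; have := ltn_ord u.
case: ifP => H1; first lia. case: ifP => H2; move/eqP: H2 => H2; lia.
Qed.

Lemma midv m : val (pathP_mid m) = m.
Proof. by rewrite /pathP_mid /= inordK //; lia. Qed.

Lemma inordv m k : k <= 2 * m -> val (inord k : 'I_(2 * m).+1) = k.
Proof. by move=> H; rewrite /= inordK. Qed.

Lemma inordu m k : k <= m -> val (inord k : 'I_m.+1) = k.
Proof. by move=> H; rewrite /= inordK. Qed.

Lemma edgeP m (u w : 'I_(2 * m).+1) :
  pathP_edge u w = ((val w == val u + 1) || (val u == val w + 1)).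
Proof. by rewrite /pathP_edge addn1 eq_sym; congr (_ || _); rewrite eq_sym addn1 eq_sym. Qed.

Lemma univP m (x : 'I_m.+1) : 1 <= m -> (x \in univV (@pathP_elt m)) = (0 < val x).
Proof.
move=> m1; apply/imsetP/idP => [[u _ ->]|x0].
  rewrite eltv; have := ltn_ord u; case: ifP => H1; first lia. case: ifP => H2; move/eqP: H2 => H2; lia.
have xm := ltn_ord x.
exists (inord (m + x)) => //; apply: val_inj; rewrite eltv /= inordv; last lia.
move: x0 => /= x0; case: ifP => H1; first lia. case: ifP => H2; first (move/eqP: H2 => H2; lia). lia.
Qed.

Lemma line_up m a k : a + k <= 2 * m ->
  exists t : seq 'I_(2 * m).+1, [/\ path (@pathP_edge m) (inord a) t,
    last (inord a) t = inord (a + k), size t = k & all (fun u => a < val u <= a + k) t].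
Proof.
elim: k => [|k IH] H; first by exists [::]; rewrite addn0.
have [t [pt lt st at_]] : _ := IH ltac:(lia).
exists (rcons t (inord (a + k.+1))); split.
- rewrite rcons_path pt lt edgeP !inordv; lia.
- by rewrite last_rcons.
- by rewrite size_rcons st.
- rewrite all_rcons inordv; last lia.
  apply/andP; split; first lia.
  by apply: sub_all at_ => u /andP[h1 h2]; apply/andP; split; rewrite /= in h1 h2 *; lia.
Qed.

Lemma line_down m a k : a + k <= 2 * m ->
  exists t : seq 'I_(2 * m).+1, [/\ path (@pathP_edge m) (inord (a + k)) t,
    last (inord (a + k)) t = inord a, size t = k & all (fun u => a <= val u < a + k) t].
Proof.
elim: k => [|k IH] H; first by exists [::]; rewrite addn0.
have [t [pt lt st at_]] : _ := IH ltac:(lia).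
exists (inord (a + k) :: t); split.
- rewrite /= pt andbT edgeP !inordv; lia.
- by [].
- by rewrite /= st.
- rewrite /= inordv; last lia.
  apply/andP; split; first lia.
  by apply: sub_all at_ => u /andP[h1 h2]; apply/andP; split; rewrite /= in h1 h2 *; lia.
Qed.

Lemma ivt m (a : 'I_(2 * m).+1) t c : path (@pathP_edge m) a t ->
  (val a <= c <= val (last a t)) || (val (last a t) <= c <= val a) ->
  exists2 u, u \in a :: t & val u = c.
Proof.
elim: t a => [|w t IH] a /=.
  move=> _ H; exists a; rewrite ?mem_head //=; rewrite /= in H; lia.
rewrite edgeP => /andP[ew pt] H.
case: (c =P val a) => [->|ne]; first by exists a; rewrite ?mem_head.
have [u ut uc] : exists2 u, u \in w :: t & val u = c.
  by apply: IH => //; rewrite /= in ew ne H *; lia.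
by exists u; rewrite // in_cons ut orbT.
Qed.

Lemma dist m (a : 'I_(2 * m).+1) t : path (@pathP_edge m) a t ->
  (val (last a t) <= val a + size t) && (val a <= val (last a t) + size t).
Proof.
elim: t a => [|w t IH] a /=; first by rewrite !addn0 !leqnn.
rewrite edgeP => /andP[ew pt]; have := IH _ pt; rewrite /= in ew *; lia.
Qed.

Lemma last_ref_last (V U : finType) (elt : V -> U) (a : V) t :
  t != [::] -> last_ref elt t (elt (last a t)) = Some (last a t).
Proof.
case/lastP: t => [|t w] // _; rewrite last_rcons -cats1 last_ref_cat.
by rewrite /last_ref /= eqxx.
Qed.

Lemma band_line m (j P P' : nat) : j <= m -> m - j <= P <= m + j -> m - j < P' < m + j ->
  P != P' -> exists t : seq 'I_(2 * m).+1, [/\ path (@pathP_edge m) (inord P) t,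
    last (inord P) t = inord P', t != [::] & all (fun u => m - j < val u < m + j) t].
Proof.
move=> jm /andP[P1 P2] /andP[Q1 Q2] ne.
case: (ltnP P P') => lt.
  have [t [pt lt' st at_]] := @line_up m P (P' - P) ltac:(lia).
  exists t; rewrite -(subnKC (ltnW lt)); split => //.
  - by apply/eqP => E; move: st; rewrite E /=; lia.
  - by apply: sub_all at_ => u /andP[h1 h2]; apply/andP; split; rewrite /= in h1 h2 *; lia.
have [t [pt lt' st at_]] := @line_down m P' (P - P') ltac:(lia).
exists t; rewrite -(subnKC lt); split => //.
- by apply/eqP => E; move: st; rewrite E /=; move/eqP: ne; lia.
- by apply: sub_all at_ => u /andP[h1 h2]; apply/andP; split; rewrite /= in h1 h2 *; lia.
Qed.

Lemma band_move m (j P P' : nat) (Z : {set 'I_m.+1}) :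
  j <= m -> m - j <= P <= m + j -> m - j < P' < m + j -> P != P' ->
  Z \subset univV (@pathP_elt m) ->
  exists Z1, [/\ connect (dec_edge (@pathP_edge m) (@pathP_lab m) (@pathP_elt m))
                    (inord P, Z) (inord P', Z1),
     (forall x, val x = val (pathP_elt (inord P' : 'I_(2 * m).+1)) ->
                (x \in Z1) = pathP_lab (inord P' : 'I_(2 * m).+1)),
     (forall x, ~~ (0 < val x < j) -> val x != m -> (x \in Z1) = (x \in Z)) &
     Z1 \subset univV (@pathP_elt m)].
Proof.
move=> jm HP HP' ne HZ.
have [t [pt lt tn at_]] := band_line jm HP HP' ne.
exists (run (@pathP_lab m) (@pathP_elt m) Z t); split.
- by rewrite -lt; apply: reach.
- move=> x Hx; have -> : x = pathP_elt (last (inord P) t) by apply: val_inj; rewrite Hx lt.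
  by rewrite runP last_ref_last // lt.
- move=> x H1 H2; rewrite runP.
  have : ~~ has (fun w => pathP_elt w == x) t.
    apply/hasP => -[q qt /eqP eq].
    have := allP at_ q qt; move: H1 H2; rewrite -eq eltv.
    have := ltn_ord q.
    case: ifP => h1; first by rewrite /=; lia.
    case: ifP => h2; first by rewrite /=; lia.
    rewrite /=; lia.
  by rewrite -last_refP negbK => /eqP ->.
- exact: run_sub.
Qed.

Definition posT m (T : {set 'I_m.+1}) j := if (inord j : 'I_m.+1) \in T then m - j else m + j.

Lemma posT_facts m (T : {set 'I_m.+1}) j : 1 <= j <= m ->
  [/\ val (pathP_elt (inord (posT T j) : 'I_(2 * m).+1)) = j,
      pathP_lab (inord (posT T j) : 'I_(2 * m).+1) = ((inord j : 'I_m.+1) \in T) &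
      posT T j = (if (inord j : 'I_m.+1) \in T then m - j else m + j)].
Proof.
move=> /andP[j1 jm]; rewrite /posT; case: ifP => H; rewrite /pathP_lab eltv inordv; try lia;
  split => //; repeat (case: ifP => ?); lia.
Qed.

Lemma Qlem m (T : {set 'I_m.+1}) j : 1 <= j -> j < m ->
  forall Z : {set 'I_m.+1}, Z \subset univV (@pathP_elt m) ->
  (forall x : 'I_m.+1, val x = j -> (x \in Z) = (x \in T)) ->
  exists Z'' : {set 'I_m.+1}, connect (dec_edge (@pathP_edge m) (@pathP_lab m) (@pathP_elt m))
                 (inord (posT T j), Z) (pathP_mid m, Z'') /\
   forall x : 'I_m.+1, (x \in Z'') =
     if val x == m then false else if 0 < val x <= j then x \in T else x \in Z.
Proof.
elim: j => [|j IH] // _ jm Z HZ Hj.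
have [F1 F2 F3] := @posT_facts m T j.+1 ltac:(lia).
case: (posnP j) => [j0|jpos].
  subst j.
  have qh1 : 1 <= m by lia.
  have qh2 : m - 1 <= posT T 1 <= m + 1 by rewrite F3; case: ifP => _; lia.
  have qh3 : m - 1 < m < m + 1 by lia.
  have qh4 : posT T 1 != m by rewrite F3; case: ifP => _; apply/eqP; lia.
  have [Z1 [C1 E1 E2 _]] := @band_move m 1 (posT T 1) m Z qh1 qh2 qh3 qh4 HZ.
  exists Z1; split => // x.
  have Em : val (pathP_elt (inord m : 'I_(2 * m).+1)) = m by rewrite eltv inordv ?ltnn ?eqxx //; lia.
  case: (eqVneq (val x) m) => xm.
    by rewrite E1 ?Em // /pathP_lab inordv; lia.
  rewrite E2 //; last lia.
  case: ifP => // h; rewrite Hj //; rewrite /= in h xm *; lia.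
have [G1 G2 G3] := @posT_facts m T j ltac:(lia).
have qh1 : j.+1 <= m by lia.
have qh2 : m - j.+1 <= posT T j.+1 <= m + j.+1 by rewrite F3; case: ifP => _; lia.
have qh3 : m - j.+1 < posT T j < m + j.+1 by rewrite G3; case: ifP => _; lia.
have qh4 : posT T j.+1 != posT T j by rewrite F3 G3; do 2 case: ifP => _; apply/eqP; lia.
have [Z1 [C1 E1 E2 S1]] := @band_move m j.+1 (posT T j.+1) (posT T j) Z qh1 qh2 qh3 qh4 HZ.
have Hj1 : forall x : 'I_m.+1, val x = j -> (x \in Z1) = (x \in T).
  move=> x xj; rewrite E1 ?G1 // G2; congr (_ \in T); apply: val_inj; rewrite inordu //; lia.
have [Z'' [C2 E'']] := IH jpos ltac:(lia) Z1 S1 Hj1.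
exists Z''; split; first exact: connect_trans C1 C2.
move=> x; rewrite E''; case: ifP => // xm.
case: (eqVneq (val x) j.+1) => xj.
  rewrite xj leqnn /= E2 -?Hj ?xj //; [by case: ifP | by rewrite ltnn andbF | apply/eqP; lia].
case: ifP => h1; first by rewrite ifT //; rewrite /= in h1 *; lia.
rewrite ifF; last by rewrite /= in h1 xj *; lia.
rewrite E2 //; last by rewrite xm.
rewrite /= in h1 xj *; lia.
Qed.

Lemma to_mid m (u : 'I_(2 * m).+1) :
  exists t, path (@pathP_edge m) u t /\ last u t = pathP_mid m.
Proof.
have uv := ltn_ord u.
case: (leqP u m) => h.
  have [t [pt lt _ _]] := @line_up m u (m - u) ltac:(lia).
  by exists t; move: pt lt; rewrite inord_val subnKC.
have [t [pt lt _ _]] := @line_down m m (u - m) ltac:(lia).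
by exists t; move: pt lt; rewrite subnKC ?inord_val //; lia.
Qed.

Lemma sinkT m (T : {set 'I_m.+1}) : 2 <= m -> (forall x, x \in T -> 0 < val x < m) ->
  in_sink (@pathP_edge m) (@pathP_lab m) (@pathP_elt m) (pathP_mid m, T).
Proof.
move=> m2 HT.
have TS : T \subset univV (@pathP_elt m).
  apply/subsetP => x /HT h; rewrite univP; rewrite /= in h *; lia.
apply: all_reach_sink => // -[u Z] HZ.
have [t [pt lt]] := to_mid u.
have C0 := reach (@pathP_lab m) HZ pt; rewrite lt in C0.
have S0 : run (@pathP_lab m) (@pathP_elt m) Z t \subset univV (@pathP_elt m) by apply: run_sub.
have [G1 G2 G3] := @posT_facts m T (m - 1) ltac:(lia).
have qh1 : m <= m by [].
have qh2 : m - m <= m <= m + m by lia.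
have qh3 : m - m < posT T (m - 1) < m + m by rewrite G3; case: ifP => _; lia.
have qh4 : m != posT T (m - 1) by rewrite G3; case: ifP => _; apply/eqP; lia.
have [Z1 [C1 E1 E2 S1]] := @band_move m m m (posT T (m - 1)) _ qh1 qh2 qh3 qh4 S0.
have Hj1 : forall x : 'I_m.+1, val x = m - 1 -> (x \in Z1) = (x \in T).
  move=> x xj; rewrite E1 ?G1 // G2; congr (_ \in T); apply: val_inj; rewrite inordu //; lia.
have [Z'' [C2 E'']] := @Qlem m T (m - 1) ltac:(lia) ltac:(lia) Z1 S1 Hj1.
have -> : T = Z''.
  apply/setP => x; rewrite E''.
  have xm := ltn_ord x.
  case: ifP => h1.
    by apply/negP => /HT; move/eqP: h1; rewrite /=; lia.
  case: ifP => // h2.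
  have x0 : val x = 0 by rewrite /= in h1 h2 *; move/eqP: h1; lia.
  apply/idP/idP => [/HT|/(subsetP S1)]; rewrite ?univP ?x0 //; lia.
apply: connect_trans C0 (connect_trans _ C2).
exact: C1.
Qed.

Lemma split_last_ref (V U : finType) (elt : V -> U) t x u :
  last_ref elt t x = Some u ->
  exists t1 t2, t = t1 ++ u :: t2 /\ ~~ has (fun w => elt w == x) t2.
Proof.
elim/last_ind: t => [|t w IH] //; rewrite -cats1 last_ref_cat.
case E: (last_ref elt [:: w] x) => [y|].
  move: E; rewrite /last_ref /=; case: ifP => // H [<-] [<-].
  by exists t, [::].
move=> /IH [t1 [t2 [-> H]]]; exists t1, (rcons t2 w); split.
  by rewrite -catA /= cats1.
move: E; rewrite /last_ref /=; case: ifP => // H' _.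
by rewrite has_rcons H' H.
Qed.

Lemma node_pos m (u : 'I_(2 * m).+1) k : 1 <= k < m -> val (pathP_elt u) = k ->
  val u = if pathP_lab u then m - k else m + k.
Proof.
rewrite eltv /pathP_lab => /andP[k1 km]; have := ltn_ord u.
case: ifP => h1; first by rewrite /=; lia.
case: ifP => h2; first by rewrite /=; lia.
rewrite /=; lia.
Qed.

Lemma has_k m (u : 'I_(2 * m).+1) s j k : path (@pathP_edge m) u s ->
  last u s = pathP_mid m -> (val u = m - j) \/ (val u = m + j) -> j <= m ->
  1 <= k <= j -> k < m -> has (fun q => pathP_elt q == (inord k : 'I_m.+1)) (u :: s).
Proof.
move=> pu lu Hu jm kj km.
have mv := midv m.
have [q qs qc] : exists2 q, q \in u :: s & val q = (if val u <= m then m - k else m + k).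
  apply: ivt => //; rewrite lu mv; case: ifP => h; move: Hu; rewrite /= in h *; lia.
apply/hasP; exists q => //; apply/eqP/val_inj; rewrite eltv inordu; last lia.
move: qc => /= qc; case: (leqP (val u) m) => h; rewrite /= in h; rewrite ?h in qc.
  rewrite qc; case: ifP => h'; first lia. case: ifP => /eqP h''; lia.
rewrite leqNgt h /= in qc; rewrite qc; case: ifP => h'; first lia. case: ifP => /eqP h''; lia.
Qed.

Lemma Clem m j : 1 <= j -> j < m ->
  forall (w : 'I_(2 * m).+1) s, path (@pathP_edge m) w s -> last w s = pathP_mid m ->
  last_ref (@pathP_elt m) (w :: s) (inord j) = Some w ->
  (forall k, 1 <= k <= j -> exists u, last_ref (@pathP_elt m) (w :: s) (inord k) = Some u
                                      /\ pathP_lab u = odd k) ->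
  j ^ 2 <= size (w :: s).
Proof.
elim: j => [|j IH] // _ jm w s pw lw Ew P.
case: (posnP j) => [->|jpos] //.
have [w' [Ew' Hw]] := P j.+1 ltac:(lia).
rewrite Ew in Ew'; case: Ew' => Ew'; subst w'.
have /andP[_ /eqP eltw] := last_ref_elt Ew.
have vw : val w = if odd j.+1 then m - j.+1 else m + j.+1.
  by rewrite -Hw; apply: node_pos; rewrite ?eltw ?inordu //; lia.
have [u [Eu Hu]] := P j ltac:(lia).
have /andP[_ /eqP eltu] := last_ref_elt Eu.
have vu : val u = if odd j then m - j else m + j.
  by rewrite -Hu; apply: node_pos; rewrite ?eltu ?inordu //; lia.
have Eus : last_ref (@pathP_elt m) s (inord j) = Some u.
  move: Eu; rewrite last_ref_cons; case: (last_ref _ s _) => //.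
  rewrite eltw; case: ifP => // /eqP /(congr1 val); rewrite !inordu //; lia.
have [s1 [s2 [Es ns2]]] := split_last_ref Eus.
move: pw lw; rewrite Es cat_path last_cat /= => /andP[ps1 /andP[eu ps2]] lw.
have Ers : forall k, 1 <= k <= j ->
   last_ref (@pathP_elt m) (w :: s) (inord k) = last_ref (@pathP_elt m) (u :: s2) (inord k).
  move=> k kj; rewrite Es -cat_cons last_ref_has //.
  apply: (@has_k m u s2 j k) => //; [by rewrite vu; case: ifP; [left|right]|lia|lia].
have Hr : j ^ 2 <= size (u :: s2).
  apply: IH => //; first lia.
    by rewrite last_ref_cons; move: ns2; rewrite -last_refP negbK => /eqP ->; rewrite eltu eqxx.
  by move=> k kj; rewrite -Ers; [apply: P; lia|lia].
have pr : path (@pathP_edge m) w (rcons s1 u) by rewrite rcons_path ps1 eu.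
have := dist pr; rewrite last_rcons size_rcons vw vu oddS.
move: Hr; rewrite /= size_cat /=.
case: (odd j) => /=; nia.
Qed.

Lemma Yodd m v : 1 <= v < m -> ((inord v : 'I_m.+1) \in pathP_Y m) = odd v.
Proof.
move=> /andP[v1 vm]; apply/imsetP/idP => [[[K kl] _ /(congr1 val)]|ov].
  have kl' : K < m %/ 2 by rewrite divn2.
  rewrite /= !inordu; try lia.
have kl : v./2 < m./2 by rewrite -!divn2; lia.
exists (Ordinal kl) => //; apply: val_inj; rewrite !inordu /= -?divn2; lia.
Qed.

Lemma path_split (T : eqType) (e : rel T) a t W1 u W2 :
  path e a t -> a :: t = W1 ++ u :: W2 -> path e u W2 /\ last a t = last u W2.
Proof.
case: W1 => [|b W1] /=.
  by move=> pt [Ea Et]; subst.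
move=> pt [Eb Et]; subst b; move: pt; rewrite Et cat_path last_cat /= => /andP[_ /andP[_ ->]].
by [].
Qed.

Lemma cert_lb m W : 2 <= m ->
  certifying (@pathP_edge m) (@pathP_lab m) (@pathP_elt m) (pathP_mid m) (pathP_Y m) W ->
  (m - 1) ^ 2 <= size W.
Proof.
move=> m2 [HW Hcov Hlr].
case: W HW Hcov Hlr => [|a t] //= /and3P[/eqP -> pt /eqP lt] Hcov Hlr.
have P : forall k, 1 <= k < m -> exists u,
    last_ref (@pathP_elt m) (pathP_mid m :: t) (inord k) = Some u /\ pathP_lab u = odd k.
  move=> k km.
  have kU : (inord k : 'I_m.+1) \in univV (@pathP_elt m) by rewrite univP ?inordu; lia.
  have H1 : has (fun w => pathP_elt w == (inord k : 'I_m.+1)) (pathP_mid m :: t) := Hcov _ kU.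
  move: H1; rewrite -last_refP.
  case E: (last_ref _ (pathP_mid m :: t) _) => [u|]; last by []. move=> _; exists u; split => //.
  have := Hlr _ kU; rewrite Yodd; last by rewrite /=; lia.
  rewrite [last_ref _ (_ :: _) _]E => -[H1 H2]; apply/idP/idP => [lu|ok].
    by apply: H2; exists u.
  by have [w [[<-]]] := H1 ok.
have [u [Eu Hu]] := P (m - 1) ltac:(lia).
have [W1 [W2 [EW nW2]]] := split_last_ref Eu.
have [pu lu] := path_split pt EW.
have /andP[_ /eqP eltu] := last_ref_elt Eu.
have vu : val u = if odd (m - 1) then m - (m - 1) else m + (m - 1).
  by rewrite -Hu; apply: node_pos; rewrite ?eltu ?inordu //; lia.
have : (m - 1) ^ 2 <= size (u :: W2).
  apply: (@Clem m (m - 1)) => //; try lia.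
  - by rewrite -lu lt.
  - by rewrite last_ref_cons; move: nW2; rewrite -last_refP negbK => /eqP ->; rewrite eltu eqxx.
  - move=> k kj; have [uk [Ek Hk]] := P k ltac:(lia); exists uk; split => //.
    rewrite -Ek EW last_ref_has //.
    apply: (@has_k m u W2 (m - 1) k) => //; [by rewrite -lu lt|by rewrite vu; case: ifP; [left|right]|lia|lia].
move=> H; apply: leq_trans H _.
have := congr1 size EW; rewrite size_cat /=; lia.
Qed.

Lemma dec_lb m s : 2 <= m ->
  walk (dec_edge (@pathP_edge m) (@pathP_lab m) (@pathP_elt m))
       (pathP_mid m, set0) (pathP_mid m, pathP_Y m) s ->
  (m - 1) ^ 2 <= 2 * m + size s.
Proof.
move=> m2; case: s => [|p0 s'] //= /and3P[/eqP -> ps /eqP ls].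
have [pt Els] := dec_path_proj ps; rewrite Els in ls; case: ls => lt EY.
set t := map fst s' in pt lt EY.
have [tu [ptu ltu stu atu]] := @line_up m m m ltac:(lia).
have [td [ptd ltd std atd]] := @line_down m m m ltac:(lia).
set Rt := tu ++ td.
have pR : path (@pathP_edge m) (pathP_mid m) Rt by rewrite cat_path ptu ltu ptd.
have lR : last (pathP_mid m) Rt = pathP_mid m by rewrite last_cat ltu ltd.
have labR : forall w, w \in Rt -> pathP_lab w = false.
  move=> w; rewrite mem_cat => /orP[/(allP atu)|/(allP atd)] /andP[h1 h2];
  rewrite /pathP_lab; apply/negbTE; rewrite -leqNgt; rewrite /= in h1 h2 *; lia.
have covR : forall x, x \in univV (@pathP_elt m) -> has (fun w => pathP_elt w == x) Rt.
  move=> x; rewrite univP; last lia; move=> x0.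
  have xm := ltn_ord x.
  have [q qin qv] := @ivt m (inord m) tu (m + x) ptu
     ltac:(rewrite ltu !inordv; rewrite /= in x0 xm *; lia).
  rewrite has_cat; apply/orP; left; apply/hasP; exists q.
    move: qin; rewrite in_cons => /orP[/eqP E|//]; move: qv; rewrite E inordv; rewrite /= in x0 *; lia.
  move: qv => /= qv; apply/eqP/val_inj; rewrite eltv qv /=; rewrite /= in x0 xm.
  case: ifP => h; first lia. case: ifP => /eqP h'; lia.
have C : certifying (@pathP_edge m) (@pathP_lab m) (@pathP_elt m) (pathP_mid m) (pathP_Y m)
           (pathP_mid m :: Rt ++ t).
  split.
  - by rewrite /walk eqxx cat_path pR lR pt last_cat lR lt eqxx.
  - by move=> x Hx /=; rewrite has_cat covR ?orbT.
  - move=> x Hx; rewrite last_ref_cons.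
    have H1 := covR x Hx; have H2 : has (fun w => pathP_elt w == x) (Rt ++ t) by rewrite has_cat H1.
    move: (H2); rewrite -last_refP; case E: (last_ref _ (Rt ++ t) x) => [y|] // _.
    rewrite -EY runP.
    move: E; rewrite last_ref_cat; case E2: (last_ref _ t x) => [z|].
      move=> [<-]; split => [H|[w [[<-] //]]]; by exists z.
    move=> E3; rewrite inE; split => // -[w [[Ew] Hw]]; subst w.
    have /andP[yR _] := last_ref_elt E3.
    by rewrite labR in Hw.
have := cert_lb m2 C; rewrite /= size_cat size_cat stu std.
have -> : size t = size s' by rewrite /t size_map. move=> H; apply: leq_trans H _; rewrite addnS ltnS leq_add2r; lia.
Qed.

Lemma arith1 m S : 2 <= m -> (m - 1) ^ 2 <= S -> (2 * m + 1) ^ 2 <= 121 * S.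
Proof. move=> h1 h2; have : (2 * m + 1) ^ 2 <= 25 * (m - 1) ^ 2 by nia. nia. Qed.

Lemma arith2 m S : 2 <= m -> 1 <= S -> (m - 1) ^ 2 <= 2 * m + S -> (2 * m + 1) ^ 2 <= 121 * S.
Proof.
move=> h1 h2 h3; case: (leqP m 4) => h4.
  have : (2 * m + 1) ^ 2 <= 81 by nia. nia.
nia.
Qed.

Lemma Ybound m (x : 'I_m.+1) : x \in pathP_Y m -> 0 < val x < m.
Proof.
case/imsetP => -[K kl] _ ->; have kl' : K < m %/ 2 by rewrite divn2.
rewrite inordu /=; lia.
Qed.

Theorem mainTheorem5 :
  (* (a) certifying walks of length O(n^2) *)
  (exists c : nat, 0 < c /\
    forall (V U : finType) (e : rel V) (lab : V -> bool) (elt : V -> U),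
      event_graph e lab elt ->
      forall (v : V) (X : {set U}), in_sink e lab elt (v, X) ->
        exists W, certifying e lab elt v X W /\ size W <= c * #|V| ^ 2)
  /\
  (* (a) diameter of the sink component is O(n^2) *)
  (exists c' : nat, 0 < c' /\
    forall (V U : finType) (e : rel V) (lab : V -> bool) (elt : V -> U),
      event_graph e lab elt ->
      forall p q, in_sink e lab elt p -> in_sink e lab elt q ->
        exists s, [/\ walk (dec_edge e lab elt) p q s,
                      (forall a, a \in s -> in_sink e lab elt a) &
                      size s <= c' * #|V| ^ 2])
  /\
  (* (b) tightness: both lower bounds Omega(n^2), n = 2m+1 *)
  (exists d : nat, 0 < d /\
    forall m : nat, 2 <= m ->
      [/\ in_sink (@pathP_edge m) (@pathP_lab m) (@pathP_elt m) (pathP_mid m, set0),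
          in_sink (@pathP_edge m) (@pathP_lab m) (@pathP_elt m) (pathP_mid m, pathP_Y m),
          (forall W, certifying (@pathP_edge m) (@pathP_lab m) (@pathP_elt m)
                                (pathP_mid m) (pathP_Y m) W ->
                     (2 * m + 1) ^ 2 <= d * size W) &
          (forall s, walk (dec_edge (@pathP_edge m) (@pathP_lab m) (@pathP_elt m))
                          (pathP_mid m, set0) (pathP_mid m, pathP_Y m) s ->
                     (2 * m + 1) ^ 2 <= d * size s)]).
Proof.
split; first exact: partA1.
split; first exact: partA2.
exists 121; split => // m m2; split.
- by apply: sinkT => // x; rewrite inE.
- by apply: sinkT => // x /Ybound.
- by move=> W HW; apply: arith1 => //; apply: cert_lb HW.
- move=> s Hs; apply: arith2 => //; last exact: dec_lb Hs.
  by case: s Hs.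
Qed.
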